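(* Let $X \in \{0,1\}$ be binary and let $Y_x$ be a real random variable such that for each $x' \in \{0,1\}$ the conditional cdf of $Y_x$ given $X=x'$ is strictly increasing and continuous on its support. Let $\underline{y}_x < \overline{y}_x$ denote the (possibly infinite) endpoints of the support of $Y_x$, and let $p(y_x) = \Pr(X=1 \mid Y_x = y_x)$. Suppose $p$ is weakly monotonic and not constant on $(\underline{y}_x, \overline{y}_x)$. Then for every $\tau \in (\underline{y}_x,\overline{y}_x)$, $Y_x$ is not $\tau$-cdf independent of $X$.
   Context: $Y_x$ is $\tau$-cdf independent of $X$ if $F_{Y_x \mid X}(\tau \mid 0) = F_{Y_x\mid X}(\tau \mid 1)$, where $F_{Y_x\mid X}(\cdot\mid x')$ denotes the conditional cdf of $Y_x$ given $X = x'$. *)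

(* Defs.v *)
From HB Require Import structures.
From mathcomp Require Import all_boot all_order all_algebra.
From mathcomp Require Import all_classical all_reals all_analysis.
Set Implicit Arguments. Unset Strict Implicit. Unset Printing Implicit Defensive.
Import Order.TTheory GRing.Theory Num.Theory.
Local Open Scope classical_set_scope.
Local Open Scope ring_scope.

Definition supp (R : realType) (mu : set R -> \bar R) : set R :=
  [set y : R | forall e : R, 0 < e ->
     let I : set R := `]y - e, y + e[%classic in (0 < mu I)%E].


Definition law (d : measure_display) (T : measurableType d) (R : realType)
  (P : probability T R) (Y : T -> R) : set R -> \bar R :=
  fun B => P (Y @^-1` B).

(* Sub-probability law of Y on the event {X = x'} (proportional to the
   conditional law of Y given X = x', hence with the same support). *)
Definition law_on (d : measure_display) (T : measurableType d) (R : realType)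
  (P : probability T R) (X : T -> bool) (Y : T -> R) (x' : bool)
  : set R -> \bar R :=
  fun B => P (Y @^-1` B `&` X @^-1` [set x']).

Definition supp_lo (d : measure_display) (T : measurableType d) (R : realType)
  (P : probability T R) (Y : T -> R) : \bar R :=
  ereal_inf (EFin @` supp (law P Y)).
Definition supp_hi (d : measure_display) (T : measurableType d) (R : realType)
  (P : probability T R) (Y : T -> R) : \bar R :=
  ereal_sup (EFin @` supp (law P Y)).

Definition cond_cdf (d : measure_display) (T : measurableType d) (R : realType)
  (P : probability T R) (X : T -> bool) (Y : T -> R) (x' : bool) (t : R) : R :=
  fine (P ([set w | Y w <= t] `&` X @^-1` [set x'])) /
  fine (P (X @^-1` [set x'])).

Definition tau_cdf_indep (d : measure_display) (T : measurableType d)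
  (R : realType) (P : probability T R) (X : T -> bool) (Y : T -> R) (tau : R)
  : Prop :=
  cond_cdf P X Y false tau = cond_cdf P X Y true tau.

(* p is a version of y |-> Pr(X = 1 | Y = y): a measurable function with
   P(X = 1, Y in B) = E[p(Y) ; Y in B] for every Borel set B. *)
Definition is_cond_prob_X1 (d : measure_display) (T : measurableType d)
  (R : realType) (P : probability T R) (X : T -> bool) (Y : T -> R)
  (p : R -> R) : Prop :=
  measurable_fun [set: R] p /\
  forall B : set R, measurable B ->
    P (X @^-1` [set true] `&` Y @^-1` B) =
    (\int[P]_(w in Y @^-1` B) (p (Y w))%:E)%E.

(* Main.v *)
Require Import Defs.
From HB Require Import structures.
From mathcomp Require Import all_boot all_order all_algebra.
From mathcomp Require Import all_classical all_reals all_analysis.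
From mathcomp Require Import ring lra measurable_realfun.
Import Order.TTheory GRing.Theory Num.Theory numFieldNormedType.Exports.
Local Open Scope classical_set_scope.
Local Open Scope ring_scope.
Set Implicit Arguments. Unset Strict Implicit. Unset Printing Implicit Defensive.
Section RM.
Context d (T : measurableType d) (R : realType) (P : probability T R).
Definition rm (A : set T) : R := fine (P A).

Lemma rmE A : measurable A -> P A = (rm A)%:E.
Proof. by move=> mA; rewrite /rm fineK// fin_num_measure. Qed.

Lemma rm_ge0 A : 0 <= rm A.
Proof. by rewrite /rm fine_ge0// measure_ge0. Qed.

Lemma rm_le A B : measurable A -> measurable B -> A `<=` B -> rm A <= rm B.
Proof.
move=> mA mB AB; rewrite -lee_fin -!rmE//.
by apply: le_measure => //; rewrite inE.
Qed.

Lemma rm_U A B : measurable A -> measurable B -> A `&` B = set0 ->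
  rm (A `|` B) = rm A + rm B.
Proof.
move=> mA mB AB; apply/eqP; rewrite -eqe EFinD -!rmE//; last exact: measurableU.
by rewrite measureU.
Qed.

Lemma rm_U2 A B : measurable A -> measurable B -> rm (A `|` B) <= rm A + rm B.
Proof.
move=> mA mB; rewrite -lee_fin EFinD -!rmE//; last exact: measurableU.
exact: measureU2.
Qed.

Lemma rm_T : rm setT = 1.
Proof. by rewrite /rm probability_setT. Qed.

Lemma rm0P A : measurable A -> P A = 0%E <-> rm A = 0.
Proof. by move=> mA; rewrite rmE//; split => [[]|->]. Qed.

Lemma rm_gt0P A : measurable A -> (0 < P A)%E <-> 0 < rm A.
Proof. by move=> mA; rewrite rmE// lte_fin. Qed.

End RM.
Section Core.
Context (R : realType).

Lemma in_ninf_c (z y : R) : ([set` `]-oo, z]] y) = (y <= z) :> Prop.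
Proof. by rewrite /= in_itv /=. Qed.
Lemma in_oc (a b y : R) : ([set` `]a, b]] y) = (a < y <= b) :> Prop.
Proof. by rewrite /= in_itv /=. Qed.
Lemma in_o_pinf (z y : R) : ([set` `]z, +oo[] y) = (z < y) :> Prop.
Proof. by rewrite /= in_itv /= andbT. Qed.

Lemma splitL (z t : R) : z <= t ->
  [set` `]-oo, t]] = [set` `]-oo, z]] `|` [set` `]z, t]].
Proof.
move=> zt; apply/seteqP; split => y /=; rewrite !in_itv /=.
  by move=> yt; case: (leP y z) => yz; [left|right; rewrite yt andbT].
by case=> [yz|/andP[_ ->]] //; exact: le_trans yz zt.
Qed.

Lemma disjL (z t : R) : [set` `]-oo, z]] `&` [set` `]z, t]] = set0.
Proof.
apply/seteqP; split => y //=; rewrite !in_itv /= => -[yz /andP[zy _]].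
by move: (lt_le_trans zy yz); rewrite ltxx.
Qed.

Lemma splitU (t z : R) : t <= z ->
  [set` `]t, +oo[] = [set` `]t, z]] `|` [set` `]z, +oo[].
Proof.
move=> tz; apply/seteqP; split => y /=; rewrite !in_itv /= ?andbT.
  by move=> ty; case: (leP y z) => yz; [left; apply/andP|right].
by case=> [/andP[-> _]|zy] //; exact: le_lt_trans tz zy.
Qed.

Lemma disjU (t z : R) : [set` `]t, z]] `&` [set` `]z, +oo[] = set0.
Proof.
apply/seteqP; split => y //=; rewrite !in_itv /= ?andbT => -[/andP[_ yz] zy].
by move: (lt_le_trans zy yz); rewrite ltxx.
Qed.

Lemma core (mu nu : set R -> R) (p : R -> R) (I : set R) (tau q za zb : R)
 (mon : forall a b, I a -> I b -> a <= b -> p a <= p b)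
 (Itau : I tau) (Ia : I za) (Ib : I zb) (pab : p za <> p zb)
 (addmu : forall A B, measurable A -> measurable B -> A `&` B = set0 ->
     mu (A `|` B) = mu A + mu B)
 (addnu : forall A B, measurable A -> measurable B -> A `&` B = set0 ->
     nu (A `|` B) = nu A + nu B)
 (bl : forall B k, measurable B -> (forall y, B y -> I y -> p y <= k) ->
     nu B <= k * mu B)
 (bg : forall B k, measurable B -> (forall y, B y -> I y -> k <= p y) ->
     k * mu B <= nu B)
 (posl : forall z, I z -> 0 < mu [set` `]-oo, z]])
 (posr : forall z, I z -> 0 < mu [set` `]z, +oo[])
 (hL : nu [set` `]-oo, tau]] = q * mu [set` `]-oo, tau]])
 (hU : nu [set` `]tau, +oo[] = q * mu [set` `]tau, +oo[]) : False.
Proof.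
set c := p tau.
have h1 : nu [set` `]-oo, tau]] <= c * mu [set` `]-oo, tau]].
  apply: bl => // y; rewrite in_ninf_c => yt Iy; exact: mon.
have h2 : c * mu [set` `]tau, +oo[] <= nu [set` `]tau, +oo[].
  apply: bg => // y; rewrite in_o_pinf => yt Iy; apply: mon => //; exact: ltW.
have pL := posl _ Itau; have pU := posr _ Itau.
have qc : q = c by apply/eqP; rewrite eq_le; apply/andP; split; nra.
have [z [Iz pz]] : exists z, I z /\ p z <> c.
  by case: (eqVneq (p za) c) => h; [exists zb; split => //; rewrite -h; apply/nesym|exists za; split => //; apply/eqP].
have : p z != c by apply/eqP.
rewrite neq_lt => /orP[pzc|pzc].
- have zt : z <= tau.
    by case: (leP z tau) => // /ltW tz; move: (mon _ _ Itau Iz tz); rewrite leNgt pzc.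
  move: hL; rewrite (splitL zt) addmu ?addnu //; try exact: disjL.
  have b1 : nu [set` `]-oo, z]] <= p z * mu [set` `]-oo, z]].
    apply: bl => // y; rewrite in_ninf_c => yt Iy; exact: mon.
  have b2 : nu [set` `]z, tau]] <= c * mu [set` `]z, tau]].
    apply: bl => // y; rewrite in_oc => /andP[_ yt] Iy; exact: mon.
  have := posl _ Iz; rewrite qc => pz0 e; nra.
- have zt : tau <= z.
    by case: (leP tau z) => // /ltW tz; move: (mon _ _ Iz Itau tz); rewrite leNgt pzc.
  move: hU; rewrite (splitU zt) addmu ?addnu //; try exact: disjU.
  have b1 : p z * mu [set` `]z, +oo[] <= nu [set` `]z, +oo[].
    apply: bg => // y; rewrite in_o_pinf => yt Iy; apply: mon => //; exact: ltW.
  have b2 : c * mu [set` `]tau, z]] <= nu [set` `]tau, z]].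
    apply: bg => // y; rewrite in_oc => /andP[ty _] Iy; apply: mon => //; exact: ltW.
  have := posr _ Iz; rewrite qc => pz0 e; nra.
Qed.
End Core.
Section Integ.
Context d (T : measurableType d) (R : realType) (P : probability T R).

Lemma fin_integrable (D : set T) (mD : measurable D) (f : T -> R)
  (mf : measurable_fun D f)
  (fin : (\int[P]_(x in D) (f x)%:E)%E \is a fin_num) :
  P.-integrable D (EFin \o f).
Proof.
apply/integrableP; split; first exact/measurable_EFinP.
have mg : measurable_fun D (EFin \o f) by exact/measurable_EFinP.
rewrite (_ : (fun x => `|(EFin \o f) x|%E) = ((EFin \o f)^\+ \+ (EFin \o f)^\-)%E);
  last by rewrite -fune_abse.
rewrite ge0_integralD//; last 2 first.
- exact: measurable_funepos.
- exact: measurable_funeneg.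
have /andP[h1 h2] : ((\int[P]_(x in D) (EFin \o f)^\+ x)%E \is a fin_num) &&
    ((\int[P]_(x in D) (EFin \o f)^\- x)%E \is a fin_num).
  by rewrite -fin_numB -integralE.
apply: lte_add_pinfty; rewrite -ge0_fin_numE//; apply: integral_ge0 => x _.
  exact: funepos_ge0.
exact: funeneg_ge0.
Qed.

Lemma int_le (D : set T) (mD : measurable D) (f : T -> R)
  (mf : measurable_fun D f)
  (fin : (\int[P]_(x in D) (f x)%:E)%E \is a fin_num) (k : R) :
  (forall x, D x -> f x <= k) ->
  (\int[P]_(x in D) (f x)%:E <= (k * rm P D)%:E)%E.
Proof.
move=> fk; rewrite EFinM -rmE// -integral_cst//.
apply: le_integral => //.
- exact: fin_integrable.
- exact: finite_measure_integrable_cst.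
- by move=> x /set_mem Dx; rewrite lee_fin fk.
Qed.

Lemma int_ge (D : set T) (mD : measurable D) (f : T -> R)
  (mf : measurable_fun D f)
  (fin : (\int[P]_(x in D) (f x)%:E)%E \is a fin_num) (k : R) :
  (forall x, D x -> k <= f x) ->
  ((k * rm P D)%:E <= \int[P]_(x in D) (f x)%:E)%E.
Proof.
move=> fk; rewrite EFinM -rmE// -integral_cst//.
apply: le_integral => //.
- exact: finite_measure_integrable_cst.
- exact: fin_integrable.
- by move=> x /set_mem Dx; rewrite lee_fin fk.
Qed.
End Integ.

Lemma cont_left (R : realType) (f : R -> R) (l eta : R) :
  {for l, continuous f} -> 0 < eta ->
  (forall t, t < l -> f t <= f l - eta) -> False.
Proof.
move=> cf e0 H.
move/cvgrPdist_lt: cf => /(_ eta e0) /nbhs_ballP [del /= d0 Hd].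
have := Hd (l - del / 2).
rewrite /ball /= (_ : l - (l - del / 2) = del / 2); last by field.
rewrite ger0_norm; last by rewrite divr_ge0 // ltW.
have -> : del / 2 < del by rewrite ltr_pdivrMr // ltr_pMr // ltr1n.
move=> /(_ isT).
have := H (l - del / 2); rewrite ltrBlDr ltrDl divr_gt0 // => /(_ isT) h.
rewrite ltr_norml => /andP[_ h2]; lra.
Qed.
Section Aux.
Context (R : realType).
Lemma aux1 (l s k : R) : 0 < k -> s <= l - k -> l <= s -> False.
Proof. move=> *; lra. Qed.
Lemma aux1' (h s k : R) : 0 < k -> h + k <= s -> s <= h -> False.
Proof. move=> *; lra. Qed.
Lemma aux2 (l a b : R) : b <= 1 -> 1 < a -> l - a < l - b.
Proof. move=> *; lra. Qed.
Lemma aux2' (l a b : R) : b <= 1 -> 1 < a -> l + b < l + a.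
Proof. move=> *; lra. Qed.
Lemma aux3 (l y N di : R) : 0 < di -> (l - y) + di < N -> l - (N + 1) < y.
Proof. move=> *; lra. Qed.
Lemma aux3' (h y N di : R) : 0 < di -> (y - h) + di < N -> y < h + (N + 1).
Proof. move=> *; lra. Qed.
Lemma aux4 (d di N : R) : 0 < d -> d + di < N -> di < N.
Proof. move=> *; lra. Qed.
Lemma aux5 (l y k : R) : k < l - y -> y < l - k.
Proof. move=> *; lra. Qed.
Lemma aux5' (h y k : R) : k < y - h -> h + k < y.
Proof. move=> *; lra. Qed.
End Aux.
Lemma aux8 (R : realType) (x k : R) : 1 - x <= k -> 1 - k <= x.
Proof. move=> *; lra. Qed.
Lemma aux9 (R : realType) (x k : R) : k <= 1 - x -> x <= 1 - k.
Proof. move=> *; lra. Qed.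
Section Main4.
Context d (T : measurableType d) (R : realType) (P : probability T R)
  (X : T -> bool) (Y : {mfun T >-> R}).

Lemma mY (B : set R) : measurable B -> measurable (Y @^-1` B).
Proof. exact: measurable_funPTI. Qed.

Lemma SP (a b : R) : a < b -> (0 < P (Y @^-1` `]a, b[))%E ->
  exists s, supp (law P Y) s /\ a <= s <= b.
Proof.
have mI : forall a b : R, measurable (Y @^-1` `]a, b[).
  by move=> ? ?; apply: mY; exact: measurable_itv.
move=> ab /(rm_gt0P P (mI a b)) Hpos.
pose S := [set t : R | a <= t <= b /\ rm P (Y @^-1` `]a, t[) = 0].
have Sa : S a.
  split; first by rewrite lexx ltW.
  by rewrite set_itvoo0 preimage_set0 /rm measure0.
have hS : has_sup S by split; [exists a | exists b => t [/andP[_ ]]].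
set m := sup S.
have am : a <= m := sup_upper_bound hS Sa.
have mb : m <= b by apply: ge_sup; [exists a | move=> t [/andP[_ ]]].
exists m; split; last by rewrite am mb.
move=> e e0 /=; rewrite /law; apply/(rm_gt0P P (mI _ _)).
rewrite lt_neqAle rm_ge0 andbT; apply/eqP => H0.
have [t [_ St] mt] := sup_adherent e0 hS.
have claim : forall u, a <= u <= b -> u < m + e -> S u.
  move=> u /andP[au ub] ume; split; first by rewrite au ub.
  apply/eqP; rewrite eq_le rm_ge0 andbT.
  have sub : Y @^-1` `]a, u[ `<=` Y @^-1` `]a, t[ `|` Y @^-1` `]m - e, m + e[.
    move=> w /=; rewrite !in_itv /= => /andP[aw wu].
    case: (ltP (Y w) t) => wt; first by left; rewrite aw.
    right; apply/andP; split; first exact: lt_le_trans mt wt.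
    exact: lt_trans wu ume.
  have mU : measurable (Y @^-1` `]a, t[ `|` Y @^-1` `]m - e, m + e[).
    by apply: measurableU; exact: mI.
  have h := rm_le P (mI a u) mU sub.
  apply: (le_trans h).
  apply: le_trans (rm_U2 P (mI a t) (mI (m - e) (m + e))) _.
  by rewrite St -H0 addr0.
case: (leP (m + e / 2) b) => hb.
  have := sup_upper_bound hS (claim (m + e / 2) _ _).
  rewrite -/m; have h2 : 0 < e / 2 by rewrite divr_gt0.
  have -> : a <= m + e / 2 <= b by apply/andP; split => //; lra.
  have -> : m + e / 2 < m + e by lra.
  move=> /(_ isT isT); lra.
have [_ Sb] : S b by apply: claim; [rewrite ltW ?lexx | lra].
by move: Hpos; rewrite Sb ltxx.
Qed.

Lemma nosupp_lo (l : R) : supp_lo P Y = l%:E -> P (Y @^-1` `]-oo, l[) = 0%E.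
Proof.
move=> hl.
have F0 : forall n : nat, P (Y @^-1` `]l - n.+2%:R, l - n.+1%:R^-1[) = 0%E.
  move=> n; apply/eqP; rewrite eq_le measure_ge0 andbT leNgt; apply/negP => Hp.
  have i0 : 0 < (n.+1%:R : R)^-1 by rewrite invr_gt0 ltr0n.
  have i1 : (n.+1%:R : R)^-1 <= 1 by rewrite invf_le1 ?ler1n ?ltr0n.
  have i2 : (1 : R) < n.+2%:R by rewrite ltr1n.
  have ab : l - n.+2%:R < l - n.+1%:R^-1 by exact: aux2.
  have [s [sS /andP[_ sb]]] := SP ab Hp.
  have : (l%:E <= s%:E)%E by rewrite -hl; apply: ereal_inf_lbound; exists s.
  rewrite lee_fin => ls; exact: aux1 i0 sb ls.
apply/eqP; rewrite eq_le measure_ge0 andbT.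
apply: le_trans (measure_sigma_subadditive P
  (F := fun n => Y @^-1` `]l - n.+2%:R, l - n.+1%:R^-1[) _ _ _) _.
- by move=> n; apply: mY; exact: measurable_itv.
- by apply: mY; exact: measurable_itv.
- move=> w /=; rewrite in_itv /= => wl.
  set del := l - Y w; have d0 : 0 < del by rewrite subr_gt0.
  have di : 0 < del^-1 by rewrite invr_gt0.
  have [n hn] : exists n : nat, del + del^-1 < n.+1%:R.
    by exists (Num.Def.truncn (del + del^-1)); exact: truncnS_gt.
  have e2 : (n.+2%:R : R) = n.+1%:R + 1 by rewrite natr1.
  exists n => //=; rewrite in_itv /=; apply/andP; split.
    by rewrite e2; exact: aux3 di hn.
  have : (n.+1%:R : R)^-1 < del.
    by rewrite invf_plt ?posrE ?ltr0n //; exact: aux4 d0 hn.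
  exact: aux5.
- by rewrite eseries0 // => i _ _; exact: F0.
Qed.

Lemma nosupp_hi (h : R) : supp_hi P Y = h%:E -> P (Y @^-1` `]h, +oo[) = 0%E.
Proof.
move=> hh.
have F0 : forall n : nat, P (Y @^-1` `]h + n.+1%:R^-1, h + n.+2%:R[) = 0%E.
  move=> n; apply/eqP; rewrite eq_le measure_ge0 andbT leNgt; apply/negP => Hp.
  have i0 : 0 < (n.+1%:R : R)^-1 by rewrite invr_gt0 ltr0n.
  have i1 : (n.+1%:R : R)^-1 <= 1 by rewrite invf_le1 ?ler1n ?ltr0n.
  have i2 : (1 : R) < n.+2%:R by rewrite ltr1n.
  have ab : h + n.+1%:R^-1 < h + n.+2%:R by exact: aux2'.
  have [s [sS /andP[sb _]]] := SP ab Hp.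
  have : (s%:E <= h%:E)%E by rewrite -hh; apply: ereal_sup_ubound; exists s.
  rewrite lee_fin => ls; exact: aux1' i0 sb ls.
apply/eqP; rewrite eq_le measure_ge0 andbT.
apply: le_trans (measure_sigma_subadditive P
  (F := fun n => Y @^-1` `]h + n.+1%:R^-1, h + n.+2%:R[) _ _ _) _.
- by move=> n; apply: mY; exact: measurable_itv.
- by apply: mY; exact: measurable_itv.
- move=> w /=; rewrite in_itv /= andbT => wl.
  set del := Y w - h; have d0 : 0 < del by rewrite subr_gt0.
  have di : 0 < del^-1 by rewrite invr_gt0.
  have [n hn] : exists n : nat, del + del^-1 < n.+1%:R.
    by exists (Num.Def.truncn (del + del^-1)); exact: truncnS_gt.
  have e2 : (n.+2%:R : R) = n.+1%:R + 1 by rewrite natr1.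
  exists n => //=; rewrite in_itv /=; apply/andP; split; last first.
    by rewrite e2; exact: aux3' di hn.
  have : (n.+1%:R : R)^-1 < del.
    by rewrite invf_plt ?posrE ?ltr0n //; exact: aux4 d0 hn.
  exact: aux5'.
- by rewrite eseries0 // => i _ _; exact: F0.
Qed.

End Main4.
Lemma aux6 (R : realType) (a b c : R) : a + c <= b -> a <= b - c.
Proof. move=> *; lra. Qed.

Section Main5.
Context d (T : measurableType d) (R : realType) (P : probability T R)
  (X : T -> bool) (Y : {mfun T >-> R}).
Hypothesis mX : forall b : bool, measurable (X @^-1` [set b]).
Hypothesis posX : forall b : bool, (0 < P (X @^-1` [set b]))%E.
Hypothesis cont : forall (x' : bool) (y : R), supp (law_on P X Y x') y ->
     {for y, continuous (cond_cdf P X Y x' : R -> R)}.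

Lemma le_set (t : R) : [set w | Y w <= t] = Y @^-1` `]-oo, t].
Proof. by apply/seteqP; split => w /=; rewrite in_itv. Qed.

Lemma mLe (t : R) : measurable [set w | Y w <= t].
Proof. rewrite le_set; apply: mY; exact: measurable_itv. Qed.

Lemma noatom_x (x' : bool) (y : R) :
  P (Y @^-1` [set y] `&` X @^-1` [set x']) = 0%E.
Proof.
have mA : measurable (Y @^-1` [set y] `&` X @^-1` [set x']).
  by apply: measurableI => //; apply: mY; exact: measurable_set1.
case: (pselect (supp (law_on P X Y x') y)) => [sy | nsy].
- apply/(rm0P P mA).
  have cf := cont sy.
  set Q := rm P (X @^-1` [set x']).
  have Q0 : 0 < Q by apply/(rm_gt0P P (mX x')).
  apply/eqP; rewrite eq_le rm_ge0 andbT leNgt; apply/negP => pos.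
  apply: (cont_left cf (eta := rm P (Y @^-1` [set y] `&` X @^-1` [set x']) / Q)).
    exact: divr_gt0.
  move=> t ty.
  change (rm P ([set w | Y w <= t] `&` X @^-1` [set x']) / Q <=
    rm P ([set w | Y w <= y] `&` X @^-1` [set x']) / Q -
    rm P (Y @^-1` [set y] `&` X @^-1` [set x']) / Q).
  rewrite -mulrBl ler_pM2r ?invr_gt0 //; apply: aux6.
  have m1 : measurable ([set w | Y w <= t] `&` X @^-1` [set x']).
    exact: measurableI (mLe t) (mX x').
  have m2 : measurable ([set w | Y w <= y] `&` X @^-1` [set x']).
    exact: measurableI (mLe y) (mX x').
  rewrite -rm_U //; last first.
    apply/seteqP; split => w //= [[wt _] [wy _]].
    by move: ty; rewrite -wy ltNge wt.
  apply: rm_le => //; first exact: measurableU.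
  move=> w /= [[wt xw]|[wy xw]]; split => //.
    by apply: le_trans wt (ltW ty).
  by rewrite wy.
- have [e [e0 he]] : exists e : R, 0 < e /\
      ~ (0 < P (Y @^-1` `](y - e)%R, (y + e)%R[ `&` X @^-1` [set x']))%E.
    apply: contrapT => H; apply: nsy => e e0 /=; rewrite /law_on.
    apply: contrapT => H2; apply: H; by exists e.
  have mB : measurable (Y @^-1` `]y - e, y + e[ `&` X @^-1` [set x']).
    by apply: measurableI => //; apply: mY; exact: measurable_itv.
  have z : P (Y @^-1` `]y - e, y + e[ `&` X @^-1` [set x']) = 0%E.
    by apply/eqP; rewrite eq_le measure_ge0 andbT leNgt; apply/negP.
  apply/eqP; rewrite eq_le measure_ge0 andbT -z.
  apply: le_measure; rewrite ?inE //.
  move=> w /= [wy xw]; split => //; rewrite wy in_itv /=.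
  by apply/andP; split; rewrite -subr_gt0; [rewrite opprB addrC subrK|rewrite addrC addKr].
Qed.

Lemma noatom (y : R) : P (Y @^-1` [set y]) = 0%E.
Proof.
have mA : forall b, measurable (Y @^-1` [set y] `&` X @^-1` [set b]).
  by move=> b; apply: measurableI => //; apply: mY; exact: measurable_set1.
apply/eqP; rewrite eq_le measure_ge0 andbT.
have h : (P (Y @^-1` [set y]) <= P ((Y @^-1` [set y] `&` X @^-1` [set false]) `|`
   (Y @^-1` [set y] `&` X @^-1` [set true])))%E.
  have m0 : measurable (Y @^-1` [set y]) by apply: mY; exact: measurable_set1.
  have mU : measurable ((Y @^-1` [set y] `&` X @^-1` [set false]) `|`
   (Y @^-1` [set y] `&` X @^-1` [set true])) by exact: measurableU.
  apply: (le_measure P); rewrite ?inE //.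
  by move=> w /= wy; case: (X w); [right|left].
apply: le_trans h _.
apply: le_trans (measureU2 P (mA false) (mA true)) _.
have z1 := noatom_x false y; have z2 := noatom_x true y.
by move: z1 z2 => /= -> ->; rewrite adde0.
Qed.

Lemma mA_lo (e : \bar R) : measurable [set y : R | ~~ (e < y%:E)%E].
Proof.
case: e => [r| |].
- rewrite (_ : [set y : R | ~~ (r%:E < y%:E)%E] = `]-oo, r]%classic); first exact: measurable_itv.
  by apply/seteqP; split => w /=; rewrite in_itv /= lte_fin -leNgt.
- by rewrite (_ : [set y : R | ~~ (+oo < y%:E)%E] = setT) //; apply/seteqP; split => w //= _; rewrite ltNge leey.
- by rewrite (_ : [set y : R | ~~ (-oo < y%:E)%E] = set0) //; apply/seteqP; split => w //=; rewrite ltNyr.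
Qed.

Lemma mA_hi (e : \bar R) : measurable [set y : R | ~~ (y%:E < e)%E].
Proof.
case: e => [r| |].
- rewrite (_ : [set y : R | ~~ (y%:E < r%:E)%E] = `[r, +oo[%classic); first exact: measurable_itv.
  by apply/seteqP; split => w /=; rewrite in_itv /= andbT lte_fin -leNgt.
- by rewrite (_ : [set y : R | ~~ (y%:E < +oo)%E] = set0) //; apply/seteqP; split => w //=; rewrite ltry.
- by rewrite (_ : [set y : R | ~~ (y%:E < -oo)%E] = setT) //; apply/seteqP; split => w //= _; rewrite ltNge leNye.
Qed.

Lemma nullA_lo : supp_lo P Y != +oo%E ->
  P (Y @^-1` [set y | ~~ (supp_lo P Y < y%:E)%E]) = 0%E.
Proof.
case E: (supp_lo P Y) => [l| |] // _.
- apply/eqP; rewrite eq_le measure_ge0 andbT.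
  have m1 : measurable (Y @^-1` `]-oo, l[) by apply: mY; exact: measurable_itv.
  have m2 : measurable (Y @^-1` [set l]) by apply: mY; exact: measurable_set1.
  have h : (P (Y @^-1` [set y | ~~ (l%:E < y%:E)%E]) <= P (Y @^-1` `]-oo, l[ `|` Y @^-1` [set l]))%E.
    have m0 : measurable (Y @^-1` [set y | ~~ (l%:E < y%:E)%E]).
      by apply: mY; rewrite -E; exact: mA_lo.
    have mU : measurable (Y @^-1` `]-oo, l[ `|` Y @^-1` [set l]) by exact: measurableU.
    apply: (le_measure P); rewrite ?inE //.
    move=> w /=; rewrite lte_fin -leNgt le_eqVlt => /orP[/eqP ->|wl]; [right|left] => //.
  apply: le_trans h _.
  apply: le_trans (measureU2 P m1 m2) _.
  have z1 := nosupp_lo E; have z2 := noatom l.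
  by move: z1 z2 => /= -> ->; rewrite adde0.
- rewrite (_ : Y @^-1` [set y | ~~ (-oo < y%:E)%E] = set0) ?measure0 //.
  by apply/seteqP; split => w //=; rewrite ltNyr.
Qed.

Lemma nullA_hi : supp_hi P Y != -oo%E ->
  P (Y @^-1` [set y | ~~ (y%:E < supp_hi P Y)%E]) = 0%E.
Proof.
case E: (supp_hi P Y) => [h| |] // _.
- apply/eqP; rewrite eq_le measure_ge0 andbT.
  have m1 : measurable (Y @^-1` `]h, +oo[) by apply: mY; exact: measurable_itv.
  have m2 : measurable (Y @^-1` [set h]) by apply: mY; exact: measurable_set1.
  have h' : (P (Y @^-1` [set y | ~~ (y%:E < h%:E)%E]) <= P (Y @^-1` `]h, +oo[ `|` Y @^-1` [set h]))%E.
    have m0 : measurable (Y @^-1` [set y | ~~ (y%:E < h%:E)%E]).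
      by apply: mY; rewrite -E; exact: mA_hi.
    have mU : measurable (Y @^-1` `]h, +oo[ `|` Y @^-1` [set h]) by exact: measurableU.
    apply: (le_measure P); rewrite ?inE //.
    move=> w /=; rewrite lte_fin -leNgt le_eqVlt => /orP[/eqP <-|wl]; [right|left] => //.
    by rewrite in_itv /= andbT.
  apply: le_trans h' _.
  apply: le_trans (measureU2 P m1 m2) _.
  have z1 := nosupp_hi E; have z2 := noatom h.
  by move: z1 z2 => /= -> ->; rewrite adde0.
- rewrite (_ : Y @^-1` [set y | ~~ (y%:E < +oo)%E] = set0) ?measure0 //.
  by apply/seteqP; split => w //=; rewrite ltry.
Qed.

End Main5.
Unset Implicit Arguments.
Set Strict Implicit.
Theorem corollary1 (d : measure_display) (T : measurableType d) (R : realType)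
  (P : probability T R) (X : T -> bool) (Y : {mfun T >-> R}) (p : R -> R)
  (mX : forall b : bool, measurable (X @^-1` [set b]))
  (posX : forall b : bool, (0 < P (X @^-1` [set b]))%E)
  (cont : forall (x' : bool) (y : R), supp (law_on P X Y x') y ->
     {for y, continuous (cond_cdf P X Y x' : R -> R)})
  (incr : forall (x' : bool) (a b : R),
     supp (law_on P X Y x') a -> supp (law_on P X Y x') b -> a < b ->
     cond_cdf P X Y x' a < cond_cdf P X Y x' b)
  (hp : is_cond_prob_X1 P X Y p)
  (mono : (forall a b : R,
             (supp_lo P Y < a%:E < supp_hi P Y)%E ->
             (supp_lo P Y < b%:E < supp_hi P Y)%E -> a <= b -> p a <= p b)
       \/ (forall a b : R,
             (supp_lo P Y < a%:E < supp_hi P Y)%E ->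
             (supp_lo P Y < b%:E < supp_hi P Y)%E -> a <= b -> p b <= p a))
  (noncst : exists a b : R,
       (supp_lo P Y < a%:E < supp_hi P Y)%E /\
       (supp_lo P Y < b%:E < supp_hi P Y)%E /\ p a <> p b) :
  forall tau : R, (supp_lo P Y < tau%:E < supp_hi P Y)%E ->
    ~ tau_cdf_indep P X Y tau.
Proof.
move=> tau Itau Hind.
have [lot thi] := andP Itau.
have lon : supp_lo P Y != +oo%E.
  by apply/negP => /eqP E; move: lot; rewrite E ltNge leey.
have hin : supp_hi P Y != -oo%E.
  by apply/negP => /eqP E; move: thi; rewrite E ltNge leNye.
pose I := [set y : R | (supp_lo P Y < y%:E < supp_hi P Y)%E].
have mAl := mA_lo (supp_lo P Y).
have mAh := mA_hi (supp_hi P Y).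
have IE : I = ~` ([set y : R | ~~ (supp_lo P Y < y%:E)%E] `|`
                  [set y : R | ~~ (y%:E < supp_hi P Y)%E]).
  apply/seteqP; split => y /=.
    by move=> /andP[h1 h2] [] /negP.
  move=> /not_orP[/negP/negPn h1 /negP/negPn h2]; exact/andP.
have mI : measurable I by rewrite IE; apply: measurableC; exact: measurableU.
have mCI : measurable (~` I) by exact: measurableC.
have nI : P (Y @^-1` (~` I)) = 0%E.
  apply/eqP; rewrite eq_le measure_ge0 andbT.
  have m1 := mY Y mAl; have m2 := mY Y mAh.
  have h : (P (Y @^-1` (~` I)) <= P (Y @^-1` [set y : R | ~~ (supp_lo P Y < y%:E)%E] `|`
       Y @^-1` [set y : R | ~~ (y%:E < supp_hi P Y)%E]))%E.
    apply: (le_measure P); rewrite ?inE //; first exact: mY.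
      exact: measurableU.
    by rewrite IE setCK preimage_setU.
  apply: le_trans h _; apply: le_trans (measureU2 P m1 m2) _.
  have z1 := nullA_lo mX posX cont lon; have z2 := nullA_hi mX posX cont hin.
  by move: z1 z2 => /= -> ->; rewrite adde0.
pose mu (B : set R) := rm P (Y @^-1` B).
pose nu (b : bool) (B : set R) := rm P (X @^-1` [set b] `&` Y @^-1` B).
have mN : forall b B, measurable B -> measurable (X @^-1` [set b] `&` Y @^-1` B).
  by move=> b B mB; apply: measurableI => //; exact: mY.
have add_mu : forall A B, measurable A -> measurable B -> A `&` B = set0 ->
    mu (A `|` B) = mu A + mu B.
  move=> A B mA mB AB; rewrite /mu preimage_setU rm_U //; try exact: mY.
  by rewrite -preimage_setI AB preimage_set0.
have add_nu : forall b A B, measurable A -> measurable B -> A `&` B = set0 ->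
    nu b (A `|` B) = nu b A + nu b B.
  move=> b A B mA mB AB; rewrite /nu preimage_setU setIUr rm_U //; try exact: mN.
  apply/seteqP; split => w // [[_ h1] [_ h2]].
  by have : (A `&` B) (Y w) by []; rewrite AB.
have mu_split : forall B, measurable B -> mu B = nu false B + nu true B.
  move=> B mB; rewrite /mu /nu -rm_U //; try exact: mN.
    congr (rm P _); apply/seteqP; split => w /=.
      by move=> h; case: (X w); [right|left].
    by case=> -[].
  by apply/seteqP; split => w // [[/= -> _] [/= ]].
have muCI : forall B, measurable B -> mu (B `&` ~` I) = 0.
  move=> B mB; apply/eqP; rewrite eq_le rm_ge0 andbT.
  have : rm P (Y @^-1` (~` I)) = 0 by apply/(rm0P P (mY Y mCI)).
  move=> <-; apply: rm_le; [apply: mY; exact: measurableI|exact: mY|].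
  by move=> w [].
have nuCI : forall b B, measurable B -> nu b (B `&` ~` I) = 0.
  move=> b B mB; apply/eqP; rewrite eq_le rm_ge0 andbT.
  have : rm P (Y @^-1` (~` I)) = 0 by apply/(rm0P P (mY Y mCI)).
  move=> <-; apply: rm_le; [apply: mN; exact: measurableI|exact: mY|].
  by move=> w [_ []].
have splitI : forall B, B = (B `&` I) `|` (B `&` ~` I).
  by move=> B; rewrite -setIUr setUv setIT.
have disjI : forall B, (B `&` I) `&` (B `&` ~` I) = set0.
  by move=> B; apply/seteqP; split => w // [[_ h1] [_ h2]].
have muI : forall B, measurable B -> mu B = mu (B `&` I).
  move=> B mB; rewrite {1}(splitI B) add_mu ?muCI ?addr0 //; exact: measurableI.
have nuI : forall b B, measurable B -> nu b B = nu b (B `&` I).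
  move=> b B mB; rewrite {1}(splitI B) add_nu ?nuCI ?addr0 //; exact: measurableI.
have [hpm hpi] := hp.
have mpY : forall D : set T, measurable_fun D (fun w => p (Y w)).
  move=> D; change (measurable_fun D (p \o Y)).
  exact: (measurableT_comp hpm (measurable_funTS (measurable_funPT Y))).
have bl : forall B k, measurable B -> (forall y, B y -> I y -> p y <= k) ->
    nu true B <= k * mu B.
  move=> B k mB hk; rewrite (nuI true B mB) (muI B mB).
  have mBI : measurable (B `&` I) by exact: measurableI.
  rewrite -lee_fin /nu /mu -(rmE P (mN true _ mBI)) (hpi _ mBI).
  apply: (@int_le _ _ _ P _ (mY Y mBI) (fun w => p (Y w)) (mpY _)).
  - by rewrite -(hpi _ mBI) fin_num_measure //; exact: mN.
  - by move=> w [h1 h2]; exact: hk.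
have bg : forall B k, measurable B -> (forall y, B y -> I y -> k <= p y) ->
    k * mu B <= nu true B.
  move=> B k mB hk; rewrite (nuI true B mB) (muI B mB).
  have mBI : measurable (B `&` I) by exact: measurableI.
  rewrite -lee_fin /nu /mu -(rmE P (mN true _ mBI)) (hpi _ mBI).
  apply: (@int_ge _ _ _ P _ (mY Y mBI) (fun w => p (Y w)) (mpY _)).
  - by rewrite -(hpi _ mBI) fin_num_measure //; exact: mN.
  - by move=> w [h1 h2]; exact: hk.
have bl0 : forall B k, measurable B -> (forall y, B y -> I y -> 1 - p y <= k) ->
    nu false B <= k * mu B.
  move=> B k mB hk.
  have h := bg B (1 - k) mB (fun y By Iy => aux8 (hk y By Iy)).
  have := mu_split B mB; lra.
have bg0 : forall B k, measurable B -> (forall y, B y -> I y -> k <= 1 - p y) ->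
    k * mu B <= nu false B.
  move=> B k mB hk.
  have h := bl B (1 - k) mB (fun y By Iy => aux9 (hk y By Iy)).
  have := mu_split B mB; lra.
have posl : forall z, I z -> 0 < mu [set` `]-oo, z]].
  move=> z /andP[lz _].
  have [_ [s ss <-] sz] := ereal_inf_lt lz.
  have := ss (z - s); rewrite subr_gt0 -lte_fin => /(_ sz) /=; rewrite /law => h.
  apply/(rm_gt0P P (mY Y (measurable_itv _))); apply: lt_le_trans h _.
  apply: (le_measure P); rewrite ?inE; try (apply: mY; exact: measurable_itv).
  move=> w /=; rewrite !in_itv /= => /andP[_ h2].
  by move: h2; rewrite addrC subrK => /ltW.
have posr : forall z, I z -> 0 < mu [set` `]z, +oo[].
  move=> z /andP[_ zh].
  have [_ [s ss <-] sz] := ereal_sup_gt zh.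
  have := ss (s - z); rewrite subr_gt0 -lte_fin => /(_ sz) /=; rewrite /law => h.
  apply/(rm_gt0P P (mY Y (measurable_itv _))); apply: lt_le_trans h _.
  apply: (le_measure P); rewrite ?inE; try (apply: mY; exact: measurable_itv).
  move=> w /=; rewrite !in_itv /= andbT => /andP[h2 _].
  by move: h2; rewrite opprB addrC subrK.
set L := [set` `]-oo, tau]]; set U := [set` `]tau, +oo[].
have mL : measurable L by exact: measurable_itv.
have mU : measurable U by exact: measurable_itv.
set q := rm P (X @^-1` [set true]).
have qT : forall b, nu b setT = rm P (X @^-1` [set b]).
  by move=> b; rewrite /nu preimage_setT setIT.
have q01 : rm P (X @^-1` [set false]) = 1 - q.
  have := mu_split setT measurableT; rewrite !qT -/q /mu preimage_setT rm_T; lra.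
have q0 : 0 < q by apply/(rm_gt0P P (mX true)).
have q1 : 0 < 1 - q by rewrite -q01; apply/(rm_gt0P P (mX false)).
have cE : forall b, cond_cdf P X Y b tau = nu b L / rm P (X @^-1` [set b]).
  by move=> b; rewrite /cond_cdf le_set setIC.
move: Hind; rewrite /tau_cdf_indep !cE q01 -/q => /eqP.
rewrite eqr_div ?(gt_eqF q0) ?(gt_eqF q1) // => /eqP H.
have hL : nu true L = q * mu L.
  by rewrite (mu_split L mL); lra.
have LU : L `|` U = setT.
  apply/seteqP; split => y // _; rewrite /L /U /= !in_itv /= andbT.
  by case: (leP y tau) => h; [left|right].
have LU0 : L `&` U = set0.
  apply/seteqP; split => y //; rewrite /L /U /= !in_itv /= andbT => -[h1 h2].
  by move: (le_lt_trans h1 h2); rewrite ltxx.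
have hU : nu true U = q * mu U.
  have h1 := add_mu L U mL mU LU0; have h2 := add_nu true L U mL mU LU0.
  move: h1 h2; rewrite LU qT -/q /mu preimage_setT rm_T => h1 h2.
  have eL : rm P (Y @^-1` L) = 1 - rm P (Y @^-1` U) by lra.
  rewrite /mu in hL; rewrite eL in hL; lra.
have [za [zb [Ia [Ib pab]]]] := noncst.
case: mono => mon.
- exact: (core (mu := mu) (nu := nu true) (p := p) (I := I) mon Itau Ia Ib pab
    add_mu (add_nu true) bl bg posl posr hL hU).
- have hL' : nu false L = (1 - q) * mu L by rewrite (mu_split L mL); lra.
  have hU' : nu false U = (1 - q) * mu U.
    by rewrite (mu_split U mU) in hU *; lra.
  have mon' : forall a b, I a -> I b -> a <= b -> 1 - p a <= 1 - p b.
    by move=> a b Ia' Ib' ab; have := mon a b Ia' Ib' ab; lra.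
  have pab' : 1 - p za <> 1 - p zb by move=> e; apply: pab; lra.
  exact: (core (mu := mu) (nu := nu false) (p := fun y => 1 - p y) (I := I)
    mon' Itau Ia Ib pab' add_mu (add_nu false) bl0 bg0 posl posr hL' hU').
Qed.
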